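(* For each $n\in\mathbb{Z}^+$, let $\mathsf{A}^{(n)}$ be a strictly lower-triangular $n\times n$ real matrix with entries $a^{(n)}_{i,j}$ and $\mathbf{v}^{(n)}$ an $n$-dimensional real row vector with entries $v^{(n)}_i$. Assume that $|a^{(n)}_{i,j}|^2\leq np$ for all $i,j,n$, for some real $p>0$, and that \[ \liminf_{n\to\infty}-\frac{1}{2n}\log\big\|\mathbf{v}^{(n)}(\mathsf{I}+\mathsf{A}^{(n)})\big\|^2\geq\Gamma \] for some real $\Gamma>0$. Then for each $\epsilon\in(0,\Gamma)$ and all sufficiently large $n$ the following holds: if $|v^{(n)}_j|>e^{-n(\Gamma-\epsilon)}$ for some index $j\in\{1,\ldots,n\}$, then there exists an index $i\in\{j+1,\ldots,n\}$ with \[ |v^{(n)}_i|\geq\frac{|v^{(n)}_j|-e^{-n(\Gamma-\epsilon)}}{n^{3/2}\sqrt{p}}. \] If moreover $\|\mathbf{v}^{(n)}\|=1$ for all $n$, then the cardinality of the set $\mathcal{S}^{(n)}:=\{j\in\{1,\ldots,n\}:|v^{(n)}_j|>n^{-2\log n}\}$ is unbounded in $n$.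
   Context: $\mathsf{I}$ denotes the identity matrix, $\|\cdot\|$ the Euclidean norm, and $\log$ the natural logarithm. *)

(* Defs.v *)
From HB Require Import structures.
From mathcomp Require Import all_boot all_order all_algebra.
From mathcomp Require Import all_classical all_reals all_analysis.
Set Implicit Arguments. Unset Strict Implicit. Unset Printing Implicit Defensive.
Import Order.TTheory GRing.Theory Num.Theory.
Local Open Scope ring_scope.

Definition sqnorm (R : realType) (n : nat) (x : 'rV[R]_n) : R :=
  \sum_(i < n) x ord0 i ^+ 2.

Definition enorm (R : realType) (n : nat) (x : 'rV[R]_n) : R :=
  Num.sqrt (sqnorm x).

Definition strictly_lower (R : realType) (n : nat) (A : 'M[R]_n) : Prop :=
  forall i j : 'I_n, (i <= j)%N -> A i j = 0.

(* -(1/(2n)) log s, as an extended real; log 0 = -oo so the value is +oo when s = 0. *)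
Definition neglog_rate (R : realType) (n : nat) (s : R) : \bar R :=
  if s == 0 then +oo%E else ((- ln s) / (2 * n%:R))%:E.

(* Main.v *)
Require Import Defs.
From HB Require Import structures.
From mathcomp Require Import all_boot all_order all_algebra.
From mathcomp Require Import all_classical all_reals all_analysis.
From mathcomp Require Import ring lra.
Import Order.TTheory GRing.Theory Num.Theory.
Local Open Scope ring_scope.

Lemma liminf_ev (R : realType) (u : (\bar R)^nat) (G e : R) :
  e < G -> (G%:E <= limn_einf u)%E -> exists N, forall n, (N <= n)%N -> (e%:E < u n)%E.
Proof.
move=> eG hG.
have hl : limn_einf u = ereal_sup (range (einfs u)).
  by rewrite limn_einf_lim; apply/cvg_lim => //; exact: cvg_einfs_sup.
have : (e%:E < ereal_sup (range (einfs u)))%E.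
  by rewrite -hl; apply: lt_le_trans hG; rewrite lte_fin.
move=> /ereal_sup_gt [_ [N _ <-]] hN.
exists N => n Nn; apply: lt_le_trans hN _.
by apply: ereal_inf_lbound; exists n.
Qed.

Lemma Dform (R : realType) (n : nat) (p : R) : (0 < n)%N -> 0 <= p ->
  n%:R `^ (3 / 2) * Num.sqrt p = n%:R * Num.sqrt (n%:R * p).
Proof.
move=> n0 p0.
have -> : (3 / 2 : R) = 1 + 2^-1 by field.
rewrite powRD; last by apply/implyP => _; rewrite pnatr_eq0 -lt0n.
by rewrite powRr1 // powR12_sqrt // sqrtrM // mulrA.
Qed.

Lemma core1 (R : realType) (n : nat) (A : 'M[R]_n) (v : 'rV[R]_n) (p E : R) (j : 'I_n) :
  strictly_lower A -> 0 < p -> (forall i j, `|A i j| ^+ 2 <= n%:R * p) -> 0 < E ->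
  sqnorm (v *m (1%:M + A)) <= E ^+ 2 -> E < `|v ord0 j| ->
  exists i : 'I_n, (j < i)%N /\
    (`|v ord0 j| - E) / (n%:R `^ (3 / 2) * Num.sqrt p) <= `|v ord0 i|.
Proof.
move=> hA p0 hAb E0 hs hj.
have n0 : (0 < n)%N by apply: leq_ltn_trans (ltn_ord j).
set w := v *m (1%:M + A).
have hw : w ord0 j = v ord0 j + \sum_k v ord0 k * A k j.
  by rewrite /w mulmxDr mulmx1 !mxE.
have hwE : `|w ord0 j| <= E.
  have h2 : w ord0 j ^+ 2 <= E ^+ 2.
    apply: le_trans hs; rewrite /sqnorm (bigD1 j) //= lerDl.
    by apply: sumr_ge0 => i _; exact: sqr_ge0.
  have : `|w ord0 j| ^+ 2 <= E ^+ 2 by rewrite real_normK // num_real.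
  have := normr_ge0 (w ord0 j); nra.
set s := Num.sqrt (n%:R * p).
have s0 : 0 < s by rewrite sqrtr_gt0 mulr_gt0 // ltr0n.
set D := n%:R `^ (3 / 2) * Num.sqrt p.
have hD : D = n%:R * s by rewrite /D Dform // ltW.
have D0 : 0 < D by rewrite hD mulr_gt0 // ltr0n.
set X := (`|v ord0 j| - E) / D.
have X0 : 0 < X by rewrite divr_gt0 // subr_gt0.
case: (pselect (exists i : 'I_n, (j < i)%N /\ X <= `|v ord0 i|)) => // hno.
exfalso.
have hlt : forall k : 'I_n, `|v ord0 k * A k j| < X * s.
  move=> k; case: (ltnP j k) => jk.
    have vk : `|v ord0 k| < X.
      by rewrite ltNge; apply/negP => hk; apply: hno; exists k.
    have Ak : `|A k j| <= s.
      have h : A k j ^+ 2 <= n%:R * p.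
        have := hAb k j. rewrite -normrX ger0_norm ?sqr_ge0 //.
      by rewrite -sqrtr_sqr; apply: ler_wsqrtr.
    rewrite normrM; apply: (le_lt_trans (y := `|v ord0 k| * s)).
      by rewrite ler_wpM2l.
    by rewrite ltr_pM2r.
  by rewrite hA // mulr0 normr0 mulr_gt0.
have hsum : `|\sum_k v ord0 k * A k j| < X * s *+ n.
  apply: le_lt_trans (ler_norm_sum _ _ _) _.
  rewrite -[n in X * s *+ n]card_ord -sumr_const.
  apply: ltr_sum => //.
  by apply/hasP; exists (Ordinal n0); rewrite ?mem_index_enum.
have hXs : X * s *+ n = `|v ord0 j| - E.
  by rewrite -mulr_natr /X -mulrA [s * _]mulrC -hD divfK // gt_eqF.
have : `|v ord0 j| <= `|w ord0 j| + `|\sum_k v ord0 k * A k j|.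
  have e : v ord0 j = w ord0 j - \sum_k v ord0 k * A k j by rewrite hw addrK.
  by rewrite {1}e; apply: le_trans (ler_normD _ _) _; rewrite normrN.
move: hsum; rewrite hXs => hsum.
lra.
Qed.

Lemma chain (R : realType) (n : nat) (v : 'rV[R]_n) (E D T : R) (M : nat) :
  0 < E -> 0 < D -> (0 < n)%N ->
  (forall j : 'I_n, E < `|v ord0 j| ->
     exists i : 'I_n, (j < i)%N /\ (`|v ord0 j| - E) / D <= `|v ord0 i|) ->
  2 * E <= (n%:R * (2 * D + 2) ^+ M)^-1 ->
  T < (n%:R * (2 * D + 2) ^+ M)^-1 ->
  (exists j : 'I_n, n%:R^-1 <= `|v ord0 j|) ->
  (M < #|[set j : 'I_n | (T < `|v ord0 j|)%R]|)%N.
Proof.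
move=> E0 D0 n0 hstep h2E hT [j0 hj0].
set B := 2 * D + 2.
have B1 : 1 <= B by rewrite /B; lra.
have B0 : 0 < B by lra.
have n0' : 0 < (n%:R : R) by rewrite ltr0n.
set c := fun k : nat => (n%:R * B ^+ k)^-1.
have cpos : forall k, 0 < c k.
  by move=> k; rewrite /c invr_gt0 mulr_gt0 // exprn_gt0.
have cmono : forall k, (k <= M)%N -> c M <= c k.
  move=> k kM; rewrite /c lef_pV2 ?posrE ?mulr_gt0 ?exprn_gt0 //.
  by apply: ler_wpM2l; [exact: ltW | exact: (ler_weXn2l B1 kM)].
have cS : forall k, c k.+1 = c k / B.
  by move=> k; rewrite /c exprS invfM [B * _]mulrC invfM mulrA -invfM.
have h2E' : 2 * E <= c M := h2E.
have hT' : T < c M := hT.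
have claim : forall k, (k <= M)%N -> exists j : 'I_n, c k <= `|v ord0 j| /\
    (k < #|[set i : 'I_n | (i <= j)%N && (T < `|v ord0 i|)%R]|)%N.
  elim=> [|k IH] kM.
    exists j0; split; first by rewrite /c expr0 mulr1.
    apply/card_gt0P; exists j0; rewrite inE leqnn /=.
    apply: lt_le_trans hT _; apply: le_trans hj0.
    by have := cmono 0%N kM; rewrite /c expr0 mulr1.
  have [j [hj hcard]] := IH (ltnW kM).
  have hcM := cmono k (ltnW kM).
  have hEj : E < `|v ord0 j| by lra.
  have [i [ji hi]] := hstep j hEj.
  have hci : c k.+1 <= `|v ord0 i|.
    apply: le_trans hi; rewrite cS.
    set y := (`|v ord0 j| - E) / D.
    have hy : y * D = `|v ord0 j| - E by rewrite /y divfK // gt_eqF.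
    set z := c k / B.
    have hz : z * B = c k by rewrite /z divfK // gt_eqF.
    have z0 : 0 <= z by rewrite /z divr_ge0 // ltW.
    rewrite /B in hz; nra.
  exists i; split => //.
  apply: leq_ltn_trans hcard _; apply: proper_card; apply/properP; split.
    apply/fintype.subsetP => x; rewrite !inE => /andP [xj ->]; rewrite andbT.
    by apply: leq_trans xj (ltnW ji).
  exists i; first by rewrite inE leqnn /=; apply: lt_le_trans hT _; apply: le_trans hci; apply: cmono.
  by rewrite inE negb_and -ltnNge ji.
have [j [_ hc]] := claim M (leqnn M).
apply: leq_trans hc _; apply: subset_leq_card; apply/fintype.subsetP => x.
by rewrite !inE => /andP [].
Qed.

Lemma asym (R : realType) (p c : R) (M n : nat) : 0 < p -> 0 < c -> (4 <= n)%N ->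
  p <= n%:R ->
  2 * ((3 * M + 1).+1)`!%:R / c ^+ (3 * M + 1).+1 <= n%:R ->
  expR ((3 * M + 1)%N%:R / 2 : R) < n%:R ->
  2 * expR (- (n%:R * c)) <=
    (n%:R * (2 * (n%:R `^ (3 / 2) * Num.sqrt p) + 2) ^+ M)^-1 /\
  n%:R `^ (- (2 * ln (n%:R : R))) <
    (n%:R * (2 * (n%:R `^ (3 / 2) * Num.sqrt p) + 2) ^+ M)^-1.
Proof.
move=> p0 c0 n4 pn hnc hna.
have n0 : (0 < n)%N by apply: leq_trans n4.
rewrite (@Dform R n p n0 (ltW p0)).
set N := (n%:R : R).
have N4 : 4 <= N by rewrite /N (ler_nat R 4 n).
set s := Num.sqrt (N * p).
have s0 : 0 <= s := sqrtr_ge0 _.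
have sN : s <= N.
  rewrite /s -[X in _ <= X]ger0_norm ?(le_trans _ N4) // -sqrtr_sqr.
  by apply: ler_wsqrtr; rewrite expr2 ler_wpM2l //; lra.
set a := (3 * M + 1)%N.
have hB : N * (2 * (N * s) + 2) ^+ M <= N ^+ a.
  rewrite /a addn1 exprS ler_wpM2l ?(le_trans _ N4) //.
  rewrite exprM; apply: lerXn2r; rewrite ?nnegrE; try nra.

have Bpos : 0 < N * (2 * (N * s) + 2) ^+ M.
  by rewrite mulr_gt0 ?exprn_gt0 //; nra.
have Napos : 0 < N ^+ a by rewrite exprn_gt0 //; lra.
have hinv : (N ^+ a)^-1 <= (N * (2 * (N * s) + 2) ^+ M)^-1.
  by rewrite lef_pV2 ?posrE.
split.
  apply: le_trans hinv.
  set x := n%:R * c.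
  have key : 2 * N ^+ a <= expR x.
    have x0 : 0 <= x by rewrite /x mulr_ge0 // ?ltW //; lra.
    apply: le_trans (expR_ge1Dxn a x0).
    set F := (a.+1)`!%:R : R.
    have F0 : 0 < F by rewrite /F ltr0n fact_gt0.
    set C := c ^+ a.+1.
    have C0 : 0 < C by rewrite exprn_gt0.
    have h2 : 2 * F <= N * C by rewrite -ler_pdivrMr.
    have h1 : 2 <= N * C / F by rewrite ler_pdivlMr.
    have -> : x ^+ a.+1 / F = N ^+ a * (N * C / F).
      by rewrite /x exprMn exprS -/N -/C !mulrA [N ^+ a * N]mulrC.
    have : N ^+ a * 2 <= N ^+ a * (N * C / F) by rewrite ler_wpM2l // ltW.
    lra.
  have -> : 2 * expR (- x) = (expR x / 2)^-1 by rewrite expRN invf_div mulrC.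
  rewrite lef_pV2 ?posrE ?divr_gt0 ?expR_gt0 //; lra.
apply: lt_le_trans hinv.
have N0 : 0 < N by lra.
have lnN : a%:R / 2 < ln N.
  by move: hna; rewrite -/a -ltr_ln ?posrE ?expR_gt0 // expRK.
have a0 : 0 <= a%:R / 2 :> R by rewrite divr_ge0 ?ler0n.
rewrite /powR gt_eqF // -(lnK (x := N ^+ a)) ?posrE // -expRN lnXn //.
rewrite ltr_expR -mulr_natr.
have : a%:R < 2 * ln N by lra.
nra.
Qed.

Lemma base (R : realType) (n : nat) (v : 'rV[R]_n) : (0 < n)%N -> enorm v = 1 ->
  exists j : 'I_n, n%:R^-1 <= `|v ord0 j|.
Proof.
move=> n0 hv.
have s0 : 0 <= sqnorm v by apply: sumr_ge0 => i _; exact: sqr_ge0.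
have s1 : sqnorm v = 1 by rewrite -(sqr_sqrtr s0); move: hv; rewrite /enorm => ->; rewrite expr1n.
case: (pselect (exists j : 'I_n, n%:R^-1 <= `|v ord0 j|)) => // hno; exfalso.
have N0 : 0 < (n%:R : R) by rewrite ltr0n.
have hlt : forall k : 'I_n, v ord0 k ^+ 2 < n%:R^-1 ^+ 2.
  move=> k; have : `|v ord0 k| < n%:R^-1.
    by rewrite ltNge; apply/negP => hk; apply: hno; exists k.
  rewrite -real_normK ?num_real //.
  have := normr_ge0 (v ord0 k); nra.
have : sqnorm v < n%:R^-1 ^+ 2 *+ n.
  rewrite /sqnorm -[n in _ *+ n]card_ord -sumr_const.
  apply: ltr_sum => // ; by apply/hasP; exists (Ordinal n0); rewrite ?mem_index_enum.
rewrite s1 -mulr_natr expr2 -mulrA mulVf ?gt_eqF // mulr1.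
have : 1 <= (n%:R : R) by rewrite ler1n.
move=> h1 h2.
have : n%:R^-1 <= 1 :> R by rewrite invf_le1.
lra.
Qed.

Lemma part1 (R : realType) (A : forall n : nat, 'M[R]_n)
  (v : forall n : nat, 'rV[R]_n) (p Gamma : R) :
  (forall n, strictly_lower (A n)) ->
  0 < p ->
  (forall n (i j : 'I_n), `|A n i j| ^+ 2 <= n%:R * p) ->
  0 < Gamma ->
  (Gamma%:E <= limn_einf (fun n => neglog_rate n (sqnorm (v n *m (1%:M + A n)))))%E ->
  (forall eps : R, 0 < eps < Gamma ->
     exists N : nat, forall n : nat, (N <= n)%N ->
       forall j : 'I_n, `|v n ord0 j| > expR (- (n%:R * (Gamma - eps))) ->
         exists i : 'I_n, (j < i)%N /\
           `|v n ord0 i| >= (`|v n ord0 j| - expR (- (n%:R * (Gamma - eps))))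
                             / (n%:R `^ (3 / 2) * Num.sqrt p))
.
Proof.
move=> hA p0 hAb G0 hlim eps /andP [e0 eG].
have eG' : Gamma - eps < Gamma by lra.
have [N hN] := liminf_ev _ _ _ _ eG' hlim.
exists N => n Nn j hj.
apply: (core1 _ _ _ _ _ _ j (hA n) p0 (hAb n) (expR_gt0 _) _ hj).
have n0 : (0 < n)%N by apply: leq_ltn_trans (ltn_ord j).
have := hN n Nn; rewrite /neglog_rate.
set s := sqnorm _.
have s0 : 0 <= s by apply: sumr_ge0 => i _; exact: sqr_ge0.
case: eqP => [-> _ | sne]; first exact: sqr_ge0.
rewrite lte_fin => h.
have sp : 0 < s by rewrite lt_neqAle s0 andbT eq_sym; apply/eqP.
have n2 : 0 < 2 * (n%:R : R) by rewrite mulr_gt0 // ltr0n.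
rewrite ltr_pdivlMr // in h.
rewrite -(lnK (x := s)) ?posrE // -expRM_natl ler_expR.
have : (Gamma - eps) * (n%:R * 2) = 2 * (n%:R * (Gamma - eps)) by ring.
lra.
Qed.


Theorem lemma3 (R : realType) (A : forall n : nat, 'M[R]_n)
  (v : forall n : nat, 'rV[R]_n) (p Gamma : R) :
  (forall n, strictly_lower (A n)) ->
  0 < p ->
  (forall n (i j : 'I_n), `|A n i j| ^+ 2 <= n%:R * p) ->
  0 < Gamma ->
  (Gamma%:E <= limn_einf (fun n => neglog_rate n (sqnorm (v n *m (1%:M + A n)))))%E ->
  (forall eps : R, 0 < eps < Gamma ->
     exists N : nat, forall n : nat, (N <= n)%N ->
       forall j : 'I_n, `|v n ord0 j| > expR (- (n%:R * (Gamma - eps))) ->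
         exists i : 'I_n, (j < i)%N /\
           `|v n ord0 i| >= (`|v n ord0 j| - expR (- (n%:R * (Gamma - eps))))
                             / (n%:R `^ (3 / 2) * Num.sqrt p))
  /\
  ((forall n : nat, (0 < n)%N -> enorm (v n) = 1) ->
     forall M : nat, exists n : nat, (0 < n)%N /\
       (M < #|[set j : 'I_n | (`|v n ord0 j| > n%:R `^ (- (2 * ln (n%:R : R))))%R]|)%N).
Proof.
move=> hA p0 hAb G0 hlim.
have P1 := part1 _ _ _ _ _ hA p0 hAb G0 hlim.
split => // hnorm M.
have eps0 : 0 < Gamma / 2 < Gamma by apply/andP; split; lra.
have [N hN] := P1 _ eps0.
set c := Gamma - Gamma / 2.
have c0 : 0 < c by rewrite /c; lra.
set a := (3 * M + 1)%N.
set K1 := (Num.Def.trunc p).+1.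
set K2 := (Num.Def.trunc (2 * (a.+1)`!%:R / c ^+ a.+1)).+1.
set K3 := (Num.Def.trunc (expR (a%:R / 2 : R))).+1.
have [n [nN [n4 [nK1 [nK2 nK3]]]]] : exists n, (N <= n)%N /\ (4 <= n)%N /\
    (K1 <= n)%N /\ (K2 <= n)%N /\ (K3 <= n)%N.
  exists (maxn (maxn N 4) (maxn K1 (maxn K2 K3))).
  by rewrite !leq_max !leqnn !orbT.
have n0 : (0 < n)%N by apply: leq_trans n4.
have hp : p <= n%:R.
  apply: ltW; apply: lt_le_trans (truncnS_gt p) _; by rewrite ler_nat.
have h2 : 2 * (a.+1)`!%:R / c ^+ a.+1 <= n%:R.
  apply: ltW; apply: lt_le_trans (truncnS_gt _) _; by rewrite ler_nat.
have h3 : expR (a%:R / 2 : R) < n%:R.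
  apply: lt_le_trans (truncnS_gt _) _; by rewrite ler_nat.
have [hE hT] := asym R p c M n p0 c0 n4 hp h2 h3.
exists n; split => //.
apply: (chain _ _ _ _ _ _ _ (expR_gt0 _) _ n0 _ hE hT).
- rewrite (Dform R n p n0 (ltW p0)).
  by rewrite mulr_gt0 // ?ltr0n // sqrtr_gt0 mulr_gt0 // ltr0n.
- by move=> j hj; apply: hN.
- exact: (base R n (v n) n0 (hnorm n n0)).
Qed.
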